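(* Let $X$ be a spectrally extremal regular graph on $n$ vertices of diameter $d$, with distinct eigenvalues $\theta_0 > \dots > \theta_d$. If the eccentricity of every vertex is $d$ and \[ n \prod_{s=1}^{d} \frac{1}{\theta_0 - \theta_s} = \sum_{r=0}^{d} (-1)^r \prod_{s \neq r} \frac{1}{\theta_r - \theta_s}, \] then $X$ is an antipodal distance-regular graph.
   Context: $X$ is a finite simple connected graph. A graph of diameter $d$ has at least $d+1$ distinct adjacency eigenvalues; it is spectrally extremal if it has exactly $d+1$. The eccentricity of a vertex $u$ is $\max_w d(u,w)$. A partition of $V(X)$ is equitable if the number of neighbours that a vertex $x$ has in a class $C$ depends only on the class containing $x$; these numbers are the parameters of the partition. The distance partition of $u$ is the partition into the sets $\{w : d(u,w)=i\}$. $X$ is distance-regular if the distance partition of every vertex is equitable with parameters independent of the vertex. A distance-regular graph of diameter $d$ is antipodal if the relation ''being at distance $0$ or $d$'' is an equivalence relation on $V(X)$. *)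

(* Defs.v *)
From HB Require Import structures.
From mathcomp Require Import all_boot all_order all_algebra.
From mathcomp Require Import algC.
Set Implicit Arguments. Unset Strict Implicit. Unset Printing Implicit Defensive.
Import Order.TTheory GRing.Theory Num.Theory.

Section Graph.
Variables (n : nat) (adj : rel 'I_n).

Definition simple_graph : Prop :=
  (forall x y, adj x y = adj y x) /\ (forall x, ~~ adj x x).

Definition walk (u w : 'I_n) (k : nat) : bool :=
  [exists p : k.-tuple 'I_n, path adj u p && (last u p == w)].

Definition connected : Prop := forall u w, exists k, walk u w k.

(* graph distance: least length of a walk from u to w (a shortest walk has
   length < n, so searching lengths 0..n-1 suffices for connected graphs) *)
Definition dist (u w : 'I_n) : nat := find (walk u w) (iota 0 n).

Definition ecc (u : 'I_n) : nat := \max_(w : 'I_n) dist u w.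

Definition diameter : nat := \max_(u : 'I_n) ecc u.

Definition regular : Prop :=
  exists k, forall x, #|[set y | adj x y]| = k.

(* adjacency matrix (over the algebraic complex numbers; all eigenvalues of
   a real symmetric matrix are real algebraic numbers) *)
Definition adjmx : 'M[algC]_n := \matrix_(i, j) ((adj i j)%:R)%R.

Definition equitable_params (f : 'I_n -> nat) (P : nat -> nat -> nat) : Prop :=
  forall x c, #|[set z | adj x z & f z == c]| = P (f x) c.

Definition equitable (f : 'I_n -> nat) : Prop := exists P, equitable_params f P.

Definition distance_regular : Prop :=
  exists P, forall u, equitable_params (dist u) P.

Definition antipodal : Prop :=
  distance_regular /\
  equivalence_rel (fun x y => (dist x y == 0) || (dist x y == diameter)).

End Graph.

(* Main.v *)
Require Import Defs.
From HB Require Import structures.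
From mathcomp Require Import all_boot all_order all_algebra.
From mathcomp Require Import algC.
From mathcomp Require Import ring.
Import Order.TTheory GRing.Theory Num.Theory.
Local Open Scope ring_scope.
Set Implicit Arguments. Unset Strict Implicit. Unset Printing Implicit Defensive.


Section Comb.
Variables (n : nat) (adj : rel 'I_n).
Hypothesis Hsym : forall x y, adj x y = adj y x.
Hypothesis Hconn : connected adj.

Lemma walkP u w k : reflect (exists p : seq 'I_n, [/\ size p = k, path adj u p & last u p = w])
  (walk adj u w k).
Proof.
apply: (iffP existsP) => [[p /andP[pp /eqP lp]] | [p [sp pp lp]]].
  by exists (val p); split => //; exact: size_tuple.
have sp' : size p == k by apply/eqP.
by exists (Tuple sp'); rewrite /= pp lp eqxx.
Qed.

Lemma walk0 u w : walk adj u w 0 = (u == w).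
Proof.
apply/walkP/eqP => [[p [sp _ <-]] | ->]; last by exists [::].
by case: p sp.
Qed.

Lemma walkS u w k : walk adj u w k.+1 = [exists z, adj u z && walk adj z w k].
Proof.
apply/walkP/existsP => [[[|z p] [//= [sp] /andP[az pp] lp]] | [z /andP[az /walkP [p [sp pp lp]]]]].
  by exists z; rewrite az; apply/walkP; exists p.
by exists (z :: p); rewrite /= sp az pp lp.
Qed.

Lemma walk_short u w k : walk adj u w k -> exists2 j, (j < n)%N & walk adj u w j.
Proof.
move=> /walkP [p [_ pp <-]].
case: (shortenP pp) => p' pp' up' _.
exists (size p').
  have := max_card (mem (u :: p')); rewrite card_ord.
  by move/card_uniqP: up' => -> /=.
by apply/walkP; exists p'.
Qed.

Lemma dist_walk u w : walk adj u w (dist adj u w).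
Proof.
have [k wk] := Hconn u w.
have [j jn wj] := walk_short wk.
have hs : has (walk adj u w) (iota 0 n) by apply/hasP; exists j => //; rewrite mem_iota.
have := nth_find 0 hs; rewrite /dist nth_iota //.
by have := hs; rewrite has_find size_iota.
Qed.

Lemma dist_le u w k : walk adj u w k -> (dist adj u w <= k)%N.
Proof.
move=> wk; case: (ltnP k n) => kn; last first.
  by apply: leq_trans kn; rewrite /dist; have := find_size (walk adj u w) (iota 0 n); rewrite size_iota.
rewrite leqNgt; apply/negP => lt.
have := before_find 0 lt; rewrite nth_iota // add0n wk //.
Qed.

Lemma dist0 u : dist adj u u = 0%N.
Proof. by apply/eqP; rewrite -leqn0; apply: dist_le; rewrite walk0. Qed.

Lemma dist_eq0 u w : (dist adj u w == 0%N) = (u == w).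
Proof.
apply/eqP/eqP => [h | ->]; last exact: dist0.
by have := dist_walk u w; rewrite h walk0 => /eqP.
Qed.

Lemma dist_tri u z w : adj u z -> (dist adj u w <= (dist adj z w).+1)%N.
Proof.
move=> az; apply: dist_le; rewrite walkS; apply/existsP; exists z.
by rewrite az dist_walk.
Qed.

Lemma dist_step u w k : dist adj u w = k.+1 -> exists2 z, adj u z & dist adj z w = k.
Proof.
move=> h; have := dist_walk u w; rewrite h walkS => /existsP [z /andP[az wz]].
exists z => //; apply/eqP; rewrite eqn_leq (dist_le wz) /=.
by have := dist_tri w az; rewrite h ltnS.
Qed.

Lemma dist_le_diam u w : (dist adj u w <= diameter adj)%N.
Proof.
apply: leq_trans (leq_bigmax u); exact: (leq_bigmax (F := dist adj u) w).
Qed.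

Lemma dist_down x v m j : dist adj x v = m -> (j <= m)%N -> exists y, dist adj y v = j.
Proof.
elim: m x => [|m IH] x h jm.
  by exists x; move: jm; rewrite leqn0 => /eqP ->.
case: (ltnP j m.+1) => jm'.
  by have [z _ hz] := dist_step h; apply: (IH z hz).
by exists x; apply/eqP; rewrite h eqn_leq jm jm'.
Qed.

End Comb.


Section Mx.
Variables (n' : nat) (adj : rel 'I_n'.+1).
Local Notation n := n'.+1.
Hypothesis Hsym : forall x y, adj x y = adj y x.
Hypothesis Hconn : connected adj.
Local Notation A := (adjmx adj).
Local Notation dist := (dist adj).
Local Notation hA := (horner_mx A).
Implicit Types p : {poly algC}.

Lemma A_tr : A^T = A.
Proof. by apply/matrixP => i j; rewrite !mxE Hsym. Qed.

Lemma sum_neq0 (I : finType) (F : I -> algC) : \sum_i F i != 0 -> exists i, F i != 0.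
Proof.
move=> h; apply/existsP; apply: contraR h => /existsPn h.
by rewrite big1 // => i _; apply/eqP; have := h i; rewrite negbK.
Qed.

Lemma expA_walk k u v : (A ^+ k) u v != 0 -> walk adj u v k.
Proof.
elim: k u => [|k IH] u.
  by rewrite expr0 mxE walk0; case: (u == v) => //; rewrite mulr0n eqxx.
rewrite exprS mxE => /sum_neq0 [z]; rewrite mxE.
case az: (adj u z); last by rewrite mul0r eqxx.
rewrite mul1r => /IH wz; rewrite walkS; apply/existsP; exists z; by rewrite az.
Qed.

Lemma expA_far k u v : (k < dist u v)%N -> (A ^+ k) u v = 0.
Proof.
move=> h; apply/eqP; apply: contraLR h => /expA_walk wk; rewrite -leqNgt.
exact: dist_le wk.
Qed.

Lemma hA_sum p : hA p = \sum_(i < size p) p`_i *: A ^+ i.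
Proof.
rewrite -[p in hA p]coefK poly_def rmorph_sum; apply: eq_bigr => i _.
by rewrite -mul_polyC rmorphM /= horner_mx_C rmorphXn /= horner_mx_X [_ * _]mul_scalar_mx.
Qed.

Lemma poly_far p u v : (size p <= dist u v)%N -> hA p u v = 0.
Proof.
move=> h; rewrite hA_sum summxE big1 // => i _.
by rewrite mxE expA_far ?mulr0 // (leq_trans (ltn_ord i) h).
Qed.

Lemma hA_comm p : hA p *m A = A *m hA p.
Proof. by have := comm_mx_horner p (comm_mx_refl A). Qed.

Lemma hA_tr p : (hA p)^T = hA p.
Proof.
elim/poly_ind: p => [|p c IH]; first by rewrite rmorph0 trmx0.
rewrite rmorphD rmorphM /= horner_mx_X horner_mx_C linearD /= tr_scalar_mx.
by rewrite [X in X + _]trmx_mul IH A_tr -hA_comm.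
Qed.

Lemma hA_ones p k : A *m (const_mx 1 : 'cV_n) = k *: const_mx 1 ->
  hA p *m (const_mx 1 : 'cV_n) = p.[k] *: const_mx 1.
Proof.
move=> hk; elim/poly_ind: p => [|p c IH]; first by rewrite rmorph0 mul0mx horner0 scale0r.
rewrite rmorphD rmorphM /= horner_mx_X horner_mx_C mulmxDl.
rewrite -mulmxA hk -scalemxAr IH scalerA mul_scalar_mx hornerE.
rewrite scalerDl; congr (_ + _); first by rewrite hornerMX mulrC.
by rewrite hornerC.
Qed.

End Mx.


Section Spec.
Variables (n' : nat) (adj : rel 'I_n'.+1).
Local Notation n := n'.+1.
Hypothesis Hsym : forall x y, adj x y = adj y x.
Local Notation A := (adjmx adj).
Local Notation hA := (horner_mx A).
Implicit Types p : {poly algC}.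
Variables (d : nat) (theta : 'I_d.+1 -> algC).
Hypothesis Hspec : forall a : algC, eigenvalue A a <-> exists i, a = theta i.

Lemma A_herm : A \is hermsymmx.
Proof.
apply/is_hermitianmxP; rewrite expr0 scale1r.
by apply/matrixP => i j; rewrite !mxE conjC_nat Hsym.
Qed.

Local Notation M := (spectralmx A).
Local Notation X := (spectral_diag A).

Lemma A_spec : A = invmx M *m diag_mx X *m M.
Proof. exact/orthomx_spectralP/hermitian_normalmx/A_herm. Qed.

Lemma X_real j : X 0 j \is Num.real.
Proof.
by have /mxOverP := hermitian_spectral_diag_real A_herm; apply.
Qed.

Lemma M_unit : M \in unitmx.
Proof. exact: spectral_unit. Qed.

Lemma MA : M *m A = diag_mx X *m M.
Proof. by rewrite [X in M *m X]A_spec !mulmxA mulmxV ?M_unit // mul1mx. Qed.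

Lemma X_eig j : eigenvalue A (X 0 j).
Proof.
apply/eigenvalueP; exists (row j M).
  rewrite -row_mul MA mul_diag_mx; apply/rowP => k; rewrite !mxE.
  by [].
apply/negP => /eqP h.
have := congr1 (fun B => (B *m invmx M) 0 j) h.
rewrite mul0mx -row_mul mulmxV ?M_unit // !mxE eqxx.
by move/eqP; rewrite oner_eq0.
Qed.

Lemma eig_X a : eigenvalue A a -> exists j, a = X 0 j.
Proof.
move/eigenvalueP => [v hv vn0].
set w := v *m invmx M.
have hwD : w *m diag_mx X = a *: w.
  have := congr1 (mulmx^~ (invmx M)) hv.
  by rewrite [X in v *m X]A_spec !mulmxA mulmxK ?M_unit // -scalemxAl.
have wn0 : w != 0.
  apply: contra vn0 => /eqP w0.
  by rewrite -[v](mulmxKV M_unit) -/w w0 mul0mx.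
have [j hj] : exists j, w 0 j != 0.
  apply/existsP; apply: contraR wn0 => /existsPn h.
  by apply/eqP/rowP => j; rewrite [RHS]mxE; have := h j; rewrite negbK => /eqP.
exists j; have := congr1 (fun B : 'rV_n => B 0 j) hwD; rewrite mul_mx_diag !mxE.
by move: hj; rewrite mxE => hj; rewrite mulrC => /(mulIf hj) ->.
Qed.

Lemma theta_real i : theta i \is Num.real.
Proof.
have [j ->] : exists j, theta i = X 0 j.
  by apply: eig_X; apply/Hspec; exists i.
exact: X_real.
Qed.

Lemma hA_spec p : hA p = invmx M *m diag_mx (map_mx (horner p) X) *m M.
Proof. by rewrite [X in horner_mx X]A_spec horner_mx_uconjC ?M_unit // horner_mx_diag. Qed.

Lemma X_theta j : exists i, X 0 j = theta i.
Proof. by apply/Hspec; exact: X_eig. Qed.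

Lemma hA_vanish p : (forall i, p.[theta i] = 0) -> hA p = 0.
Proof.
move=> h; rewrite hA_spec.
have -> : map_mx (horner p) X = 0.
  by apply/rowP => j; rewrite !mxE; have [i ->] := X_theta j; rewrite h.
by rewrite (_ : diag_mx 0 = 0) ?mulmx0 ?mul0mx //; apply/matrixP => i j; rewrite !mxE mul0rn.
Qed.

Lemma hA_herm p : (forall i, p.[theta i] \is Num.real) ->
  forall u v, hA p u v = (hA p v u)^*.
Proof.
move=> h u v; rewrite hA_spec invmx_unitary ?spectral_unitarymx //.
rewrite !mxE rmorph_sum; apply: eq_bigr => k _.
rewrite !mul_mx_diag !mxE !rmorphM /= conjCK.
have [i hi] := X_theta k; rewrite hi (conj_Creal (h i)).
by ring.
Qed.

End Spec.


Section Energy.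
Variables (n' : nat) (adj : rel 'I_n'.+1).
Local Notation n := n'.+1.
Hypothesis Hsym : forall x y, adj x y = adj y x.
Hypothesis Hconn : connected adj.
Variable k : nat.
Hypothesis Hk : forall x, #|[set y | adj x y]| = k.
Local Notation A := (adjmx adj).
Local Notation hA := (horner_mx A).
Implicit Types p : {poly algC}.

Lemma rowsum x : \sum_j A x j = k%:R.
Proof.
rewrite -(Hk x) (eq_bigr (fun j => if adj x j then 1 else 0)); last first.
  by move=> j _; rewrite mxE; case: (adj x j).
rewrite -big_mkcond /= sumr_const; congr (_ *+ _).
by rewrite cardsE.
Qed.

Lemma colsum j : \sum_i A i j = k%:R.
Proof. by rewrite -(rowsum j); apply: eq_bigr => i _; rewrite !mxE Hsym. Qed.

Lemma A_ge0 i j : 0 <= A i j.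
Proof. by rewrite mxE ler0n. Qed.

Lemma energy (v : 'rV_n) lam : v *m A = lam *: v ->
  \sum_i \sum_j A i j * ((v 0 i - v 0 j) * (v 0 i - v 0 j)^*)
  = 2%:R * (k%:R - lam) * \sum_i v 0 i * (v 0 i)^*.
Proof.
move=> hv.
have ev j : \sum_i v 0 i * A i j = lam * v 0 j.
  by have := congr1 (fun B : 'rV_n => B 0 j) hv; rewrite !mxE.
set S := \sum_i v 0 i * (v 0 i)^*.
have e1 : \sum_i \sum_j A i j * (v 0 i * (v 0 i)^*) = k%:R * S.
  rewrite /S big_distrr /=; apply: eq_bigr => i _.
  by rewrite -big_distrl /= rowsum.
have e2 : \sum_i \sum_j A i j * (v 0 j * (v 0 j)^*) = k%:R * S.
  rewrite exchange_big /S big_distrr /=; apply: eq_bigr => j _.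
  by rewrite -big_distrl /= colsum.
have e3 : \sum_i \sum_j A i j * (v 0 i * (v 0 j)^*) = lam * S.
  rewrite exchange_big /S big_distrr /=; apply: eq_bigr => j _.
  rewrite (eq_bigr (fun i => (v 0 i * A i j) * (v 0 j)^*)); last by move=> i _; ring.
  by rewrite -big_distrl /= ev mulrA.
have e4 : \sum_i \sum_j A i j * (v 0 j * (v 0 i)^*) = lam * S.
  rewrite /S big_distrr /=; apply: eq_bigr => i _.
  rewrite (eq_bigr (fun j => (v 0 j * A j i) * (v 0 i)^*)); last first.
    by move=> j _; rewrite [A j i]mxE [A i j]mxE Hsym; ring.
  by rewrite -big_distrl /= ev mulrA.
rewrite (eq_bigr (fun i => \sum_j A i j * (v 0 i * (v 0 i)^*) + \sum_j A i j * (v 0 j * (v 0 j)^*)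
   - \sum_j A i j * (v 0 i * (v 0 j)^*) - \sum_j A i j * (v 0 j * (v 0 i)^*))); last first.
  move=> i _; rewrite -!big_split -!sumrB /=; apply: eq_bigr => j _.
  rewrite rmorphB /=; ring.
rewrite !sumrB big_split /= e1 e2 e3 e4; ring.
Qed.

Lemma energy_ge0 (v : 'rV_n) :
  0 <= \sum_i \sum_j A i j * ((v 0 i - v 0 j) * (v 0 i - v 0 j)^*).
Proof.
apply: sumr_ge0 => i _; apply: sumr_ge0 => j _.
by apply: mulr_ge0; [exact: A_ge0 | exact: mul_conjC_ge0].
Qed.

Lemma eig_le_k (v : 'rV_n) lam : v *m A = lam *: v -> v != 0 -> lam <= k%:R.
Proof.
move=> hv vn0.
have Sgt0 : 0 < \sum_i v 0 i * (v 0 i)^*.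
  have [j hj] : exists j, v 0 j != 0.
    apply/existsP; apply: contraR vn0 => /existsPn h.
    by apply/eqP/rowP => j; rewrite [RHS]mxE; have := h j; rewrite negbK => /eqP.
  rewrite (bigD1 j) //= ltr_pwDl //.
    by rewrite lt_def mul_conjC_eq0 hj mul_conjC_ge0.
  by apply: sumr_ge0 => i _; exact: mul_conjC_ge0.
have := energy_ge0 v; rewrite (energy hv) pmulr_lge0 // pmulr_rge0 ?ltr0n //.
by rewrite subr_ge0.
Qed.

Lemma eig_k_const (v : 'rV_n) : v *m A = k%:R *: v -> forall i j, v 0 i = v 0 j.
Proof.
move=> hv.
have E0 := energy hv; rewrite subrr mulr0 mul0r in E0.
have adjeq i j : adj i j -> v 0 i = v 0 j.
  move=> aij.
  have nn i' j' : 0 <= A i' j' * ((v 0 i' - v 0 j') * (v 0 i' - v 0 j')^*).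
    by apply: mulr_ge0; [exact: A_ge0 | exact: mul_conjC_ge0].
  have h2 := psumr_eq0P (fun i' _ => sumr_ge0 _ (fun j' _ => nn i' j')) E0 (i:=i) isT.
  have := psumr_eq0P (fun j' _ => nn i j') h2 (i:=j) isT.
  rewrite mxE aij mul1r => /eqP; rewrite mul_conjC_eq0 subr_eq0 => /eqP //.
move=> i j; have [m wm] := Hconn i j.
elim: m i wm => [|m IH] i; first by rewrite walk0 => /eqP ->.
rewrite walkS => /existsP [z /andP [az wz]].
by rewrite (adjeq _ _ az) (IH _ wz).
Qed.

End Energy.


Lemma size_drop (R : nzRingType) (q : {poly R}) m :
  (size q <= m.+1)%N -> q`_m = 0 -> (size q <= m)%N.
Proof.
move=> h1 h2; case: (ltnP m (size q)) => // h3.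
have e : size q = m.+1 by apply/eqP; rewrite eqn_leq h1 h3.
have : lead_coef q = 0 by rewrite lead_coefE e.
by move/eqP; rewrite lead_coef_eq0 => /eqP q0; rewrite q0 size_poly0 in e.
Qed.

Lemma size_red (R : fieldType) (r q : {poly R}) m :
  (size r <= m.+1)%N -> size q = m.+1 -> (size (r - (r`_m / q`_m) *: q)%R <= m)%N.
Proof.
move=> hr hq; apply: size_drop.
  by rewrite (leq_trans (size_polyD _ _)) // size_polyN geq_max hr (leq_trans (size_scale_leq _ _)) ?hq.
have qm : q`_m != 0.
  by have := lead_coef_eq0 q; rewrite lead_coefE hq /= => ->; rewrite -size_poly_eq0 hq.
by rewrite coefB coefZ divfK // subrr.
Qed.

Section Main.
Variables (n' d : nat) (adj : rel 'I_n'.+1) (theta : 'I_d.+1 -> algC) (k : nat).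
Local Notation n := n'.+1.
Hypothesis Hsym : forall x y, adj x y = adj y x.
Hypothesis Hconn : connected adj.
Hypothesis Hk : forall x, #|[set y | adj x y]| = k.
Hypothesis Hdiam : diameter adj = d.
Hypothesis Hdecr : forall i j : 'I_d.+1, (i < j)%N -> theta j < theta i.
Hypothesis Hspec : forall a : algC, eigenvalue (adjmx adj) a <-> exists i, a = theta i.
Hypothesis Hecc : forall u, ecc adj u = d.
Hypothesis Hid : n%:R * \prod_(s < d.+1 | s != ord0) (theta ord0 - theta s)^-1
         = \sum_(r < d.+1) (-1) ^+ r * \prod_(s < d.+1 | s != r) (theta r - theta s)^-1.
Local Notation A := (adjmx adj).
Local Notation hA := (horner_mx A).
Local Notation dist := (dist adj).
Implicit Types p : {poly algC}.

Definition L (r : 'I_d.+1) : {poly algC} := \prod_(s < d.+1 | s != r) ('X - (theta s)%:P).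
Definition wt (r : 'I_d.+1) : algC := (-1) ^+ r * \prod_(s < d.+1 | s != r) (theta r - theta s)^-1.
Definition Pl : {poly algC} := \sum_r wt r *: L r.
Definition cc : algC := \sum_r wt r.
Definition pi0 : algC := \prod_(s < d.+1 | s != ord0) (theta ord0 - theta s).
Definition mpol : {poly algC} := \prod_(s < d.+1) ('X - (theta s)%:P).

Lemma theta_neq i j : i != j -> theta i != theta j.
Proof.
move=> nij; case: (ltngtP i j) => h.
- by have := Hdecr h; rewrite lt_def => /andP[].
- by have := Hdecr h; rewrite lt_def eq_sym => /andP[].
- by move: nij; rewrite (val_inj h) eqxx.
Qed.

Lemma prod_neq0 r : \prod_(s < d.+1 | s != r) (theta r - theta s) != 0.
Proof.
by apply/prodf_neq0 => s hs; rewrite subr_eq0 theta_neq // eq_sym.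
Qed.

Lemma horner_L r j : (L r).[theta j] =
  if j == r then \prod_(s < d.+1 | s != r) (theta r - theta s) else 0.
Proof.
rewrite /L horner_prod; case: eqP => [-> | /eqP hj].
  by apply: eq_bigr => s _; rewrite hornerXsubC.
by rewrite (bigD1 j) //= hornerXsubC subrr mul0r.
Qed.

Lemma size_L r : size (L r) = d.+1.
Proof.
rewrite /L -big_filter size_prod_XsubC size_filter; congr (_.+1).
transitivity #|predC1 r|; last by rewrite cardC1 card_ord.
by rewrite cardE /enum_mem size_filter.
Qed.

Lemma L_monic r : L r \is monic.
Proof. exact: monic_prod_XsubC. Qed.

Lemma Pl_theta j : Pl.[theta j] = (-1) ^+ j.
Proof.
rewrite /Pl horner_sum (bigD1 j) //= big1 ?addr0; last first.
  by move=> r hr; rewrite hornerZ horner_L eq_sym (negPf hr) mulr0.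
rewrite hornerZ horner_L eqxx /wt prodfV -mulrA mulVf ?mulr1 //.
exact: prod_neq0.
Qed.

Lemma size_Pl_sub : (size (Pl - cc *: L ord0)%R <= d)%N.
Proof.
rewrite /Pl /cc scaler_suml -sumrB.
apply: (big_ind (fun q : {poly algC} => size q <= d)%N) => //.
  by rewrite size_poly0.
  by move=> x y hx hy; rewrite (leq_trans (size_polyD _ _)) // geq_max hx hy.
move=> r _; rewrite -scalerBr (leq_trans (size_scale_leq _ _)) //.
apply: size_drop.
  by rewrite (leq_trans (size_polyD _ _)) // size_polyN !size_L maxnn.
have m1 := L_monic r; have m2 := L_monic ord0.
move/monicP: m1; move/monicP: m2; rewrite !lead_coefE !size_L /= => e2 e1.
by rewrite coefB e1 e2 subrr.
Qed.

Lemma pi0_neq0 : pi0 != 0.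
Proof. exact: prod_neq0. Qed.

Lemma cc_val : cc = n%:R / pi0.
Proof. by rewrite /cc /wt -Hid prodfV. Qed.

Lemma n_neq0 : (n%:R : algC) != 0.
Proof. by rewrite pnatr_eq0. Qed.

Lemma theta0_k : theta ord0 = k%:R.
Proof.
have ones : (const_mx 1 : 'rV[algC]_n) *m A = k%:R *: const_mx 1.
  apply/rowP => j; rewrite mxE [RHS]mxE [const_mx 1 0 j]mxE mulr1 -(colsum Hsym Hk j).
  by apply: eq_bigr => i _; rewrite [const_mx 1 0 i]mxE mul1r.
have onen0 : (const_mx 1 : 'rV[algC]_n) != 0.
  apply/eqP => /rowP /(_ ord0); rewrite !mxE => /eqP; by rewrite oner_eq0.
have [r hr] : exists r, k%:R = theta r.
  by apply/Hspec; apply/eigenvalueP; exists (const_mx 1).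
apply/eqP; rewrite eq_le; apply/andP; split.
  have : eigenvalue A (theta ord0) by apply/Hspec; exists ord0.
  by move/eigenvalueP => [v hv vn0]; exact: (eig_le_k Hsym Hk hv vn0).
rewrite hr; case: (posnP r) => h.
  by have -> : r = ord0 by apply: val_inj.
by rewrite le_eqVlt (Hdecr (i:=ord0) h) orbT.
Qed.

Lemma Zm_val u v : hA (L ord0) u v = pi0 / n%:R.
Proof.
set Zm := hA (L ord0).
have hv : hA (('X - (theta ord0)%:P) * L ord0) = 0.
  apply: (hA_vanish Hsym Hspec) => j; rewrite hornerM hornerXsubC horner_L.
  by case: eqP => [-> | _]; rewrite ?subrr ?mul0r ?mulr0.
have hZA : Zm *m A = k%:R *: Zm.
  move: hv; rewrite rmorphM rmorphB /= horner_mx_X horner_mx_C /= => /eqP.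
  rewrite mulrBl subr_eq0 => /eqP h.
  by rewrite (hA_comm adj) -theta0_k -mul_scalar_mx.
have rowc u' i j : Zm u' i = Zm u' j.
  have hr : row u' Zm *m A = k%:R *: row u' Zm.
    by rewrite -row_mul hZA; apply/rowP => l; rewrite !mxE.
  by have := eig_k_const Hsym Hconn Hk hr i j; rewrite !mxE.
have symZ u' v' : Zm u' v' = Zm v' u'.
  by have := congr1 (fun B : 'M_n => B v' u') (hA_tr Hsym (L ord0)); rewrite mxE.
have cst u' v' : Zm u' v' = Zm ord0 ord0.
  by rewrite (rowc u' v' ord0) symZ (rowc ord0 u' ord0).
have ones : A *m (const_mx 1 : 'cV[algC]_n) = k%:R *: const_mx 1.
  apply/colP => i; rewrite mxE [RHS]mxE [const_mx 1 i 0]mxE mulr1 -(rowsum Hk i).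
  by apply: eq_bigr => j _; rewrite [const_mx 1 j 0]mxE mulr1.
have := congr1 (fun B : 'cV_n => B ord0 ord0) (hA_ones (L ord0) ones).
rewrite !mxE (eq_bigr (fun _ => Zm ord0 ord0)); last by move=> j _; rewrite mxE mulr1 cst.
rewrite sumr_const card_ord -theta0_k horner_L eqxx => h.
move: h; rewrite mulr1 => h.
by rewrite cst /pi0 -h -[Zm ord0 ord0 *+ n]mulr_natr mulfK // n_neq0.
Qed.

Definition Dm (j : nat) : 'M[algC]_n := \matrix_(u, v) (dist u v == j)%:R.
Definition Ls (j : nat) : 'M[algC]_n := \matrix_(u, v) (dist u v < j)%:R.

Lemma dist_le_d u v : (dist u v <= d)%N.
Proof. by rewrite -Hdiam dist_le_diam. Qed.

Lemma Pm_d u v : dist u v = d -> hA Pl u v = 1.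
Proof.
move=> h.
have e : Pl = cc *: L ord0 + (Pl - cc *: L ord0) by rewrite addrC subrK.
rewrite e rmorphD /= linearZ /= mxE [X in _ + X]poly_far; last first.
  by rewrite h size_Pl_sub.
rewrite mxE Zm_val cc_val addr0.
by rewrite mulrA divfK ?pi0_neq0 // mulfV // n_neq0.
Qed.

Lemma Pm_sq : hA Pl * hA Pl = 1.
Proof.
have : hA (Pl * Pl - 1) = 0.
  apply: (hA_vanish Hsym Hspec) => j.
  rewrite hornerD hornerN hornerM Pl_theta hornerC -exprD addnn -mul2n exprM.
  by rewrite expr2 mulN1r opprK expr1n subrr.
by rewrite rmorphB rmorphM rmorph1 /= => /eqP; rewrite subr_eq0 => /eqP.
Qed.

Lemma Pm_herm u v : hA Pl u v = (hA Pl v u)^*.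
Proof.
apply: (hA_herm Hsym Hspec) => i; rewrite Pl_theta.
by apply: rpredX; rewrite rpredN rpred1.
Qed.

Lemma rownorm u : \sum_v hA Pl u v * (hA Pl u v)^* = 1.
Proof.
have := congr1 (fun B : 'M[algC]_n => B u u) Pm_sq.
rewrite [X in _ = X -> _]mxE eqxx mulr1n !mxE => <-.
by apply: eq_bigr => v _; rewrite [hA Pl v u]Pm_herm.
Qed.

Lemma Pm_zero u v0 v : dist u v0 = d -> v != v0 -> hA Pl u v = 0.
Proof.
move=> h0 hv.
have := rownorm u; rewrite (bigD1 v0) //= Pm_d // rmorph1 mulr1.
rewrite -[X in _ = X]addr0 => /addrI h.
have nn : forall v', v' != v0 -> 0 <= hA Pl u v' * (hA Pl u v')^*.
  by move=> v' _; exact: mul_conjC_ge0.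
have := psumr_eq0P nn h (i:=v) hv.
by move/eqP; rewrite mul_conjC_eq0 => /eqP.
Qed.

Lemma ecc_witness u : exists v0, dist u v0 = d.
Proof.
have [v0 h] := @bigop.eq_bigmax _ (dist u) (ltac:(by rewrite card_ord)).
by exists v0; rewrite -h -(Hecc u).
Qed.

Lemma Pm_Dd : hA Pl = Dm d.
Proof.
apply/matrixP => u v; rewrite mxE; case: eqP => [h | h]; first exact: Pm_d.
have [v0 h0] := ecc_witness u.
by apply: (Pm_zero h0); apply: contra_notN h => /eqP ->.
Qed.

Lemma antipode_uniq u v1 v2 : dist u v1 = d -> dist u v2 = d -> v1 = v2.
Proof.
move=> h1 h2; apply/eqP; rewrite eq_sym; apply/negPn/negP => hn.
have := Pm_zero h1 hn; rewrite Pm_d // => /eqP; by rewrite oner_eq0.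
Qed.

Lemma pairs j : (j < d)%N -> exists u' u v, [/\ adj u' u, dist u' v = j & dist u v = j.+1].
Proof.
move=> jd; have [v h] := ecc_witness ord0.
have [u hu] := dist_down Hconn h jd.
have [u' au hu'] := dist_step Hconn hu.
by exists u', u, v; rewrite Hsym.
Qed.

Lemma pair_at j : (j <= d)%N -> exists u v, dist u v = j.
Proof.
move=> jd; have [v h] := ecc_witness ord0.
by have [u hu] := dist_down Hconn h jd; exists u, v.
Qed.

Lemma AD_supp j u v : (A *m Dm j) u v != 0 -> (j <= (dist u v).+1)%N.
Proof.
rewrite mxE => /sum_neq0 [z]; rewrite !mxE.
case az: (adj u z); last by rewrite mul0r eqxx.
case: (dist z v =P j) => [<- _ | _]; last by rewrite mulr0 eqxx.
by apply: (dist_tri Hconn); rewrite Hsym.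
Qed.

Lemma AD_pos j u' u v : adj u' u -> dist u v = j -> (A *m Dm j) u' v != 0.
Proof.
move=> au hu; rewrite mxE (bigD1 u) //= !mxE au hu eqxx mulr1.
apply: lt0r_neq0; rewrite ltr_pwDl ?ltr01 //.
by apply: sumr_ge0 => z _; rewrite !mxE; apply: mulr_ge0; rewrite ler0n.
Qed.

Lemma step i (p q s : {poly algC}) : (i.+1 <= d)%N -> size p = i.+2 -> size q = i.+3 ->
  (size s <= i.+1)%N -> hA p = Dm i.+1 -> hA q = Dm i.+2 -> hA s = Ls i.+1 ->
  exists p' s' : {poly algC}, [/\ size p' = i.+1, (size s' <= i)%N, hA p' = Dm i & hA s' = Ls i].
Proof.
move=> hid sp sq ss hp hq hs.
set b := ('X * p)`_(i.+2) / q`_(i.+2).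
set g1 := 'X * p - b *: q.
have sg1 : (size g1 <= i.+2)%N.
  apply: size_red => //; rewrite (leq_trans (size_polyMleq _ _)) // size_polyX sp //.
set a := g1`_(i.+1) / p`_(i.+1).
set g := g1 - a *: p.
have sg : (size g <= i.+1)%N by apply: size_red.
have hg : hA g = A *m Dm i.+1 - b *: Dm i.+2 - a *: Dm i.+1.
  by rewrite /g /g1 !rmorphB /= !linearZ /= rmorphM /= horner_mx_X hp hq.
have E u v : hA g u v = (A *m Dm i.+1) u v - b * (dist u v == i.+2)%:R - a * (dist u v == i.+1)%:R.
  rewrite hg; set AD := A *m Dm i.+1; rewrite !mxE.
  done.
have G1 u v : (dist u v < i)%N -> hA g u v = 0.
  move=> h; rewrite E.
  have -> : (A *m Dm i.+1) u v = 0.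
    apply/eqP; apply: contraTT h => /AD_supp; rewrite ltnS -leqNgt //.
  have -> : (dist u v == i.+2) = false by apply/negbTE; rewrite neq_ltn (ltn_trans h) // ltnW.
  have -> : (dist u v == i.+1) = false by apply/negbTE; rewrite neq_ltn (ltn_trans h).
  by rewrite !mulr0 !subrr.
have G2 u v : (i < dist u v)%N -> hA g u v = 0.
  by move=> h; apply: poly_far; apply: leq_trans sg h.
have gi : g`_i != 0.
  apply/negP => /eqP gi0.
  have sg' : (size g <= i)%N by apply: size_drop.
  have [u' [u [v [au hu' hu]]]] := pairs hid.
  have := poly_far (adj := adj) (u := u') (v := v) (leq_trans sg' (eq_leq (esym hu'))).
  rewrite E hu' (@ltn_eqF i i.+2) // (@ltn_eqF i i.+1) // !mulr0 !subr0.
  by move/eqP; apply/negP; apply: AD_pos au hu.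
have sgi : size g = i.+1.
  apply/eqP; rewrite eqn_leq sg /=; rewrite ltnNge; apply: contra gi => h.
  by rewrite nth_default.
set beta := s`_i / g`_i.
set s' := s - beta *: g.
have ss' : (size s' <= i)%N by apply: size_red.
have key u v : dist u v = i -> beta * hA g u v = 1.
  move=> h; have := poly_far (adj := adj) (u := u) (v := v) (leq_trans ss' (eq_leq (esym h))).
  rewrite /s' rmorphB /= linearZ /= hs !mxE h ltnSn /= => /eqP.
  by rewrite subr_eq0 => /eqP <-.
have bn0 : beta != 0.
  have [u [v h]] := pair_at (ltnW hid).
  by apply: contra_eqN (key _ _ h) => /eqP ->; rewrite mul0r eq_sym oner_eq0.
exists (beta *: g), s'; split => //.
- by rewrite size_scale.
- apply/matrixP => u v; rewrite linearZ /= !mxE.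
  case: (ltngtP (dist u v) i) => h.
  + by rewrite G1 // mulr0.
  + by rewrite G2 // mulr0.
  + by rewrite key // h eqxx.
- have e : hA s' = hA s - hA (beta *: g) by rewrite /s' rmorphB.
  have hp' : forall u v, hA (beta *: g) u v = (dist u v == i)%:R.
    move=> u v; rewrite linearZ /= !mxE.
    case: (ltngtP (dist u v) i) => h.
    + by rewrite G1 // mulr0.
    + by rewrite G2 // mulr0.
    + by rewrite key // h eqxx.
  apply/matrixP => u v; rewrite e !mxE hp' hs mxE.
  case: (ltngtP (dist u v) i) => h.
  + by rewrite (ltn_trans h (ltnSn i)) subr0.
  + by rewrite ltnNge h subr0.
  + by rewrite h ltnSn subrr.
Qed.


Lemma mpol_size : size mpol = d.+2.
Proof.
rewrite size_prod_XsubC; congr (_.+1).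
by rewrite -[RHS](card_ord d.+1) cardT enumT.
Qed.

Lemma mpol_neq0 : mpol != 0.
Proof. by rewrite -size_poly_eq0 mpol_size. Qed.

Lemma hA_mpol : hA mpol = 0.
Proof.
apply: (hA_vanish Hsym Hspec) => j; rewrite horner_prod (bigD1 j) //=.
by rewrite hornerXsubC subrr mul0r.
Qed.

Lemma Dm_out : Dm d.+1 = 0.
Proof.
apply/matrixP => u v; rewrite !mxE.
have h : (dist u v < d.+1)%N by rewrite ltnS; exact: dist_le_d.
by rewrite (ltn_eqF h).
Qed.

Lemma Ls_d : hA (cc *: L ord0 - Pl) = Ls d.
Proof.
apply/matrixP => u v; rewrite rmorphB /= linearZ /= Pm_Dd !mxE Zm_val cc_val.
rewrite mulrA divfK ?pi0_neq0 // mulfV ?n_neq0 //.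
have := dist_le_d u v; rewrite leq_eqVlt; case/orP => [/eqP -> | h].
  by rewrite eqxx ltnn subrr.
by rewrite h ltn_eqF // subr0.
Qed.

Lemma size_Pl : size Pl = d.+1.
Proof.
have e : Pl = cc *: L ord0 + (Pl - cc *: L ord0) by rewrite addrC subrK.
have ccn0 : cc != 0 by rewrite cc_val mulf_neq0 ?invr_eq0 ?n_neq0 ?pi0_neq0.
rewrite e size_polyDl size_scale // size_L //.
by rewrite ltnS size_Pl_sub.
Qed.

Lemma inv t : (t <= d)%N -> exists p q s : {poly algC},
  [/\ size p = (d - t).+1, size q = (d - t).+2 & (size s <= d - t)%N] /\
  [/\ hA p = Dm (d - t), hA q = Dm (d - t).+1 & hA s = Ls (d - t)].
Proof.
elim: t => [_|t IH ht].
  exists Pl, mpol, (cc *: L ord0 - Pl); rewrite subn0; split; split.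
  - exact: size_Pl.
  - exact: mpol_size.
  - by rewrite -opprB size_polyN size_Pl_sub.
  - exact: Pm_Dd.
  - by rewrite hA_mpol Dm_out.
  - exact: Ls_d.
have [p [q [s [[sp sq ss] [hp hq hs]]]]] := IH (ltnW ht).
have e : (d - t = (d - t.+1).+1)%N by rewrite subnSK.
rewrite e in sp sq ss hp hq hs.
have hid : ((d - t.+1).+1 <= d)%N by rewrite -e leq_subr.
have [p' [s' [sp' ss' hp' hs']]] := step hid sp sq ss hp hq hs.
by exists p', p, s'; split; split.
Qed.

Lemma Dm_poly j : (j <= d)%N -> exists p, hA p = Dm j.
Proof.
move=> jd; have [p [q [s [_ [hp _ _]]]]] := inv (leq_subr j d).
by exists p; rewrite hp subKn.
Qed.

Lemma Dm_poly_size j : (j <= d)%N -> exists p, size p = j.+1 /\ hA p = Dm j.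
Proof.
move=> jd; have [p [q [s [[sp _ _] [hp _ _]]]]] := inv (leq_subr j d).
by exists p; rewrite hp sp subKn.
Qed.

Lemma span_low m : (m <= d.+1)%N -> forall g : {poly algC}, (size g <= m)%N ->
  exists phi : nat -> algC, forall u v, hA g u v = phi (dist u v).
Proof.
elim: m => [_ g | m IH hm g hg].
  rewrite leqn0 size_poly_eq0 => /eqP ->; exists (fun _ => 0) => u v.
  by rewrite rmorph0 mxE.
have [p [sp hp]] := Dm_poly_size (hm : (m <= d)%N).
set c := g`_m / p`_m.
have [phi hphi] := IH (ltnW hm) _ (size_red hg sp).
exists (fun j => phi j + c * (j == m)%:R) => u v.
rewrite -hphi rmorphB /= linearZ /= hp !mxE subrK //.
Qed.

Lemma span (g : {poly algC}) : exists phi : nat -> algC, forall u v, hA g u v = phi (dist u v).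
Proof.
have e : hA g = hA (g %% mpol).
  by rewrite {1}(divp_eq g mpol) rmorphD rmorphM /= hA_mpol mulr0 add0r.
have hs : (size (g %% mpol)%R <= d.+1)%N by rewrite -ltnS -mpol_size ltn_modp mpol_neq0.
have [phi hphi] := span_low (leqnn d.+1) hs.
by exists phi => u v; rewrite e hphi.
Qed.

Lemma Dm_any c : exists p, hA p = Dm c.
Proof.
case: (leqP c d) => h; first exact: Dm_poly.
exists 0; apply/matrixP => u v.
by rewrite rmorph0 !mxE (ltn_eqF (leq_ltn_trans (dist_le_d u v) h)).
Qed.

Definition cnt u x c := #|[set z | adj x z & dist u z == c]|.

Lemma cnt_mx u x c : (cnt u x c)%:R = (Dm c *m A) u x.
Proof.
rewrite /cnt -sum1_card natr_sum mxE.
rewrite big_mkcond /=; apply: eq_bigr => z _; rewrite !mxE inE Hsym.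
by case: (adj z x); case: (dist u z == c); rewrite ?mulr0 ?mulr1.
Qed.

Lemma cnt_eq u x u' x' c : dist u x = dist u' x' -> cnt u x c = cnt u' x' c.
Proof.
move=> h; have [p hp] := Dm_any c.
have [phi hphi] := span (p * 'X).
have E y z : (cnt y z c)%:R = phi (dist y z) :> algC.
  by rewrite cnt_mx -hp -hphi rmorphM /= horner_mx_X.
by apply/eqP; rewrite -(eqr_nat algC) E E h.
Qed.

Lemma dist_sym u v : dist u v = dist v u.
Proof.
have [p hp] := Dm_poly (dist_le_d u v).
have := congr1 (fun B : 'M[algC]_n => B v u) (hA_tr Hsym p).
rewrite mxE hp !mxE eqxx.
case: eqP => [-> // | _] /eqP; by rewrite eqr_nat.
Qed.

Lemma drg : distance_regular adj.
Proof.
exists (fun j c => if [pick ux : 'I_n * 'I_n | dist ux.1 ux.2 == j] is Some ux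
                  then cnt ux.1 ux.2 c else 0%N).
move=> u x c; case: pickP => [[u0 x0] /= /eqP h | h].
  by apply: cnt_eq; rewrite h.
by have := h (u, x); rewrite /= eqxx.
Qed.

Lemma antip : antipodal adj.
Proof.
split; first exact: drg.
rewrite Hdiam => x y z; split; first by rewrite dist0.
case/orP => /eqP h.
  by move/eqP: h; rewrite (dist_eq0 Hconn) => /eqP ->.
apply/idP/idP => /orP [] /eqP h2.
- move/eqP: h2; rewrite (dist_eq0 Hconn) => /eqP <-.
  by rewrite dist_sym h eqxx orbT.
- by rewrite -(antipode_uniq h h2) dist0.
- move/eqP: h2; rewrite (dist_eq0 Hconn) => /eqP <-.
  by rewrite h eqxx orbT.
- have h3 : dist y x = d by rewrite dist_sym.
  by rewrite -(antipode_uniq h3 h2) dist0.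
Qed.

End Main.



Unset Implicit Arguments.

Theorem corollary3p8 (n d : nat) (adj : rel 'I_n)
  (Hsimple : simple_graph adj) (Hconn : connected adj) (Hreg : regular adj)
  (Hdiam : diameter adj = d)
  (theta : 'I_d.+1 -> algC)
  (Hdecr : forall i j : 'I_d.+1, (i < j)%N -> theta j < theta i)
  (Hspec : forall a : algC, eigenvalue (adjmx adj) a <-> exists i, a = theta i)
  (Hecc : forall u, ecc adj u = d)
  (Hid : n%:R * \prod_(s < d.+1 | s != ord0) (theta ord0 - theta s)^-1
         = \sum_(r < d.+1) (-1) ^+ r * \prod_(s < d.+1 | s != r) (theta r - theta s)^-1) :
  antipodal adj.
Proof.
move: adj Hsimple Hconn Hreg Hdiam Hspec Hecc Hid.
case: n => [|n'] adj Hs Hc Hr Hd Hsp He Hi.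
  exfalso; have := (proj2 (Hsp (theta ord0))) (ex_intro _ ord0 erefl).
  move/eigenvalueP => [v _ vn0]; move/negP: vn0; apply.
  by apply/eqP/rowP => [[]].
case: Hs => Hsym _; case: Hr => k Hk.
exact: (antip Hsym Hc Hk Hd Hdecr Hsp He Hi).
Qed.
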